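(* Let $\mathcal{A}$ be a Fréchet algebra and $\mathcal{U}$ a countably incomplete ultrafilter on an index set $I$. Then the ultrapower $(\mathcal{A})_{\mathcal{U}}$ is unital if and only if $\mathcal{A}$ is unital.
   Context: A Fréchet algebra $(\mathcal{A},(P_n))$ is a complete topological algebra whose topology is given by an increasing sequence of submultiplicative seminorms. For a countably incomplete ultrafilter $\mathcal{U}$ on $I$ (i.e. there are $U_1\supseteq U_2\supseteq\cdots$ in $\mathcal{U}$ with empty intersection), the ultrapower $(\mathcal{A})_{\mathcal{U}}$ is $\ell_\infty(I,\mathcal{A})/\mathcal{N}_{\mathcal{U}}$, where $\ell_\infty(I,\mathcal{A})=\{(x_i)\in\prod_I\mathcal{A}:\sup_iP_n(x_i)<\infty\ \forall n\}$ and $\mathcal{N}_{\mathcal{U}}=\{(x_i):\lim_{\mathcal{U}}P_n(x_i)=0\ \forall n\}$, with seminorms $Q'_n((x_i)_{\mathcal{U}})=\lim_{\mathcal{U}}P_n(x_i)$ and coordinatewise product; it is a Fréchet algebra. *)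

(* Defs.v *)
From Stdlib Require Import Reals.
Open Scope R_scope.

Record FrechetAlgebra := {
  fa_car :> Type;
  fa_zero : fa_car;
  fa_add : fa_car -> fa_car -> fa_car;
  fa_opp : fa_car -> fa_car;
  fa_scal : R -> fa_car -> fa_car;
  fa_mul : fa_car -> fa_car -> fa_car;
  fa_P : nat -> fa_car -> R;
  fa_addA : forall x y z, fa_add x (fa_add y z) = fa_add (fa_add x y) z;
  fa_addC : forall x y, fa_add x y = fa_add y x;
  fa_add0 : forall x, fa_add x fa_zero = x;
  fa_addN : forall x, fa_add x (fa_opp x) = fa_zero;
  fa_scal1 : forall x, fa_scal 1 x = x;
  fa_scalA : forall a b x, fa_scal a (fa_scal b x) = fa_scal (a * b) x;
  fa_scalDr : forall a x y, fa_scal a (fa_add x y) = fa_add (fa_scal a x) (fa_scal a y);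
  fa_scalDl : forall a b x, fa_scal (a + b) x = fa_add (fa_scal a x) (fa_scal b x);
  fa_mulA : forall x y z, fa_mul x (fa_mul y z) = fa_mul (fa_mul x y) z;
  fa_mulDl : forall x y z, fa_mul (fa_add x y) z = fa_add (fa_mul x z) (fa_mul y z);
  fa_mulDr : forall x y z, fa_mul x (fa_add y z) = fa_add (fa_mul x y) (fa_mul x z);
  fa_scal_mull : forall a x y, fa_mul (fa_scal a x) y = fa_scal a (fa_mul x y);
  fa_scal_mulr : forall a x y, fa_mul x (fa_scal a y) = fa_scal a (fa_mul x y);
  fa_P_nonneg : forall n x, 0 <= fa_P n x;
  fa_P_add : forall n x y, fa_P n (fa_add x y) <= fa_P n x + fa_P n y;
  fa_P_scal : forall n a x, fa_P n (fa_scal a x) = Rabs a * fa_P n x;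
  fa_P_mul : forall n x y, fa_P n (fa_mul x y) <= fa_P n x * fa_P n y;
  fa_P_incr : forall n x, fa_P n x <= fa_P (S n) x;
  fa_sep : forall x, (forall n, fa_P n x = 0) -> x = fa_zero;
  fa_complete : forall u : nat -> fa_car,
    (forall n eps, 0 < eps -> exists N, forall p q, (N <= p)%nat -> (N <= q)%nat ->
        fa_P n (fa_add (u p) (fa_opp (u q))) < eps) ->
    exists l, forall n eps, 0 < eps -> exists N, forall p, (N <= p)%nat ->
        fa_P n (fa_add (u p) (fa_opp l)) < eps
}.

Arguments fa_zero {_}. Arguments fa_add {_}. Arguments fa_opp {_}.
Arguments fa_scal {_}. Arguments fa_mul {_}. Arguments fa_P {_}.

Definition fa_sub {A : FrechetAlgebra} (x y : A) : A := fa_add x (fa_opp y).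

Definition unital (A : FrechetAlgebra) : Prop :=
  exists e : A, forall x : A, fa_mul e x = x /\ fa_mul x e = x.

Definition is_ultrafilter {I : Type} (U : (I -> Prop) -> Prop) : Prop :=
  U (fun _ => True) /\
  ~ U (fun _ => False) /\
  (forall S T : I -> Prop, U S -> (forall i, S i -> T i) -> U T) /\
  (forall S T : I -> Prop, U S -> U T -> U (fun i => S i /\ T i)) /\
  (forall S : I -> Prop, U S \/ U (fun i => ~ S i)).

Definition countably_incomplete {I : Type} (U : (I -> Prop) -> Prop) : Prop :=
  exists Un : nat -> I -> Prop,
    (forall n, U (Un n)) /\
    (forall n i, Un (S n) i -> Un n i) /\
    (forall i, ~ (forall n, Un n i)).

Definition ulim {I : Type} (U : (I -> Prop) -> Prop) (f : I -> R) (l : R) : Prop :=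
  forall eps, 0 < eps -> U (fun i => Rabs (f i - l) < eps).

Definition bounded_fam {A : FrechetAlgebra} {I : Type} (x : I -> A) : Prop :=
  forall n, exists M, forall i, fa_P n (x i) <= M.

Definition in_NU {A : FrechetAlgebra} {I : Type} (U : (I -> Prop) -> Prop)
  (x : I -> A) : Prop :=
  forall n, ulim U (fun i => fa_P n (x i)) 0.

(** Equality in the ultrapower (A)_U = ell_infty(I,A)/N_U of the classes of x, y. *)
Definition up_eq {A : FrechetAlgebra} {I : Type} (U : (I -> Prop) -> Prop)
  (x y : I -> A) : Prop :=
  in_NU U (fun i => fa_sub (x i) (y i)).

Definition up_mul {A : FrechetAlgebra} {I : Type} (x y : I -> A) : I -> A :=
  fun i => fa_mul (x i) (y i).

Definition ultrapower_unital (A : FrechetAlgebra) (I : Type)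
  (U : (I -> Prop) -> Prop) : Prop :=
  exists e : I -> A, bounded_fam e /\
    forall x : I -> A, bounded_fam x ->
      up_eq U (up_mul e x) x /\ up_eq U (up_mul x e) x.

(* Main.v *)
Require Import Defs.
From Stdlib Require Import Reals Lra Lia Classical IndefiniteDescription.
Open Scope R_scope.

Lemma add_cancel {A : FrechetAlgebra} (x y z : A) : fa_add x z = fa_add y z -> x = y.
Proof.
  intro H. rewrite <- (fa_add0 A x), <- (fa_add0 A y), <- (fa_addN A z).
  rewrite !fa_addA, H. reflexivity.
Qed.

Lemma add0l {A : FrechetAlgebra} (x : A) : fa_add fa_zero x = x.
Proof. rewrite fa_addC; apply fa_add0. Qed.

Lemma scal0 {A : FrechetAlgebra} (x : A) : fa_scal 0 x = fa_zero.
Proof.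
  apply (add_cancel _ _ (fa_scal 0 x)). rewrite <- fa_scalDl, Rplus_0_l, add0l. reflexivity.
Qed.

Lemma P_zero {A : FrechetAlgebra} n : fa_P n (@fa_zero A) = 0.
Proof. rewrite <- (scal0 (@fa_zero A)), fa_P_scal, Rabs_R0. ring. Qed.

Lemma mul0l {A : FrechetAlgebra} (y : A) : fa_mul fa_zero y = fa_zero.
Proof.
  apply (add_cancel _ _ (fa_mul fa_zero y)). rewrite <- fa_mulDl, !add0l. reflexivity.
Qed.

Lemma opp_uniq {A : FrechetAlgebra} (x y : A) : fa_add x y = fa_zero -> y = fa_opp x.
Proof.
  intro H. apply (add_cancel _ _ x). rewrite (fa_addC _ (fa_opp x)), fa_addN, fa_addC. exact H.
Qed.

Lemma mul_oppl {A : FrechetAlgebra} (x y : A) : fa_mul (fa_opp x) y = fa_opp (fa_mul x y).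
Proof.
  apply opp_uniq. rewrite <- fa_mulDl, fa_addN. apply mul0l.
Qed.

Lemma opp_scal {A : FrechetAlgebra} (x : A) : fa_opp x = fa_scal (-1) x.
Proof.
  symmetry. apply opp_uniq. rewrite <- (fa_scal1 A x) at 1. rewrite <- fa_scalDl.
  replace (1 + -1) with 0 by ring. apply scal0.
Qed.

Lemma P_opp {A : FrechetAlgebra} n (x : A) : fa_P n (fa_opp x) = fa_P n x.
Proof. rewrite opp_scal, fa_P_scal. replace (Rabs (-1)) with 1 by (rewrite Rabs_left; lra). ring. Qed.

Lemma sub_split {A : FrechetAlgebra} (x y z : A) :
  fa_sub x z = fa_add (fa_sub x y) (fa_sub y z).
Proof.
  unfold fa_sub. rewrite <- fa_addA, (fa_addA _ (fa_opp y)), (fa_addC _ (fa_opp y) y), fa_addN, add0l.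
  reflexivity.
Qed.

Lemma P_tri {A : FrechetAlgebra} n (x y z : A) :
  fa_P n (fa_sub x z) <= fa_P n (fa_sub x y) + fa_P n (fa_sub y z).
Proof. rewrite (sub_split x y z). apply fa_P_add. Qed.

Lemma sub_opp {A : FrechetAlgebra} (x y : A) : fa_sub y x = fa_opp (fa_sub x y).
Proof.
  apply opp_uniq. unfold fa_sub.
  rewrite <- fa_addA, (fa_addA _ (fa_opp y)), (fa_addC _ (fa_opp y) y), fa_addN, add0l, fa_addN.
  reflexivity.
Qed.

Lemma P_sub_sym {A : FrechetAlgebra} n (x y : A) : fa_P n (fa_sub x y) = fa_P n (fa_sub y x).
Proof. rewrite (sub_opp x y), P_opp. reflexivity. Qed.

Lemma sub_eq0 {A : FrechetAlgebra} (x y : A) : fa_sub x y = fa_zero -> x = y.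
Proof.
  unfold fa_sub. intro H. apply (add_cancel _ _ (fa_opp y)). rewrite H, fa_addN. reflexivity.
Qed.

Lemma sub_xx {A : FrechetAlgebra} (x : A) : fa_sub x x = fa_zero.
Proof. apply fa_addN. Qed.

Lemma P_mon {A : FrechetAlgebra} n m (x : A) : (n <= m)%nat -> fa_P n x <= fa_P m x.
Proof.
  induction 1. lra. eapply Rle_trans. exact IHle. apply fa_P_incr.
Qed.

Lemma sub_mulr {A : FrechetAlgebra} (x y a : A) :
  fa_sub (fa_mul x a) (fa_mul y a) = fa_mul (fa_sub x y) a.
Proof. unfold fa_sub. rewrite fa_mulDl, mul_oppl. reflexivity. Qed.

Definition opA (A : FrechetAlgebra) : FrechetAlgebra.
Proof.
  refine (@Build_FrechetAlgebra A fa_zero fa_add fa_opp fa_scal (fun x y => fa_mul y x) fa_P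
    (fa_addA A) (fa_addC A) (fa_add0 A) (fa_addN A) (fa_scal1 A) (fa_scalA A) (fa_scalDr A)
    (fa_scalDl A) _ _ _ _ _ (fa_P_nonneg A) (fa_P_add A) (fa_P_scal A) _ (fa_P_incr A)
    (fa_sep A) (fa_complete A)).
  - intros x y z. symmetry. apply fa_mulA.
  - intros x y z. apply fa_mulDr.
  - intros x y z. apply fa_mulDl.
  - intros a x y. apply fa_scal_mulr.
  - intros a x y. apply fa_scal_mull.
  - intros n x y. rewrite Rmult_comm. apply fa_P_mul.
Defined.

Definition HLprop {A : FrechetAlgebra} {I : Type} (U : (I -> Prop) -> Prop) (e : I -> A) :=
  forall x : I -> A, bounded_fam x -> up_eq U (up_mul e x) x.

Lemma HL_op {A : FrechetAlgebra} {I : Type} (U : (I -> Prop) -> Prop) (e : I -> A) :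
  (forall x : I -> A, bounded_fam x -> up_eq U (up_mul x e) x) -> @HLprop (opA A) I U e.
Proof. intros H x Hx. exact (H x Hx). Qed.

Lemma claimL {A : FrechetAlgebra} {I : Type} (U : (I -> Prop) -> Prop)
  (HU : is_ultrafilter U) (e : I -> A) (He : bounded_fam e) (HL : HLprop U e) :
  forall n eps, 0 < eps -> exists S, U S /\
    forall i, S i -> forall j, fa_P n (fa_sub (fa_mul (e i) (e j)) (e j)) < eps.
Proof.
  intros n eps Heps.
  set (F := fun i j => eps <= fa_P n (fa_sub (fa_mul (e i) (e j)) (e j))).
  assert (Hc : forall i, exists j, (exists j', F i j') -> F i j).
  { intro i. destruct (classic (exists j', F i j')) as [[j' Hj]|Hn].
    - exists j'. auto.
    - exists i. intro H; contradiction. }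
  set (sig := fun i => proj1_sig (constructive_indefinite_description _ (Hc i))).
  assert (Hs : forall i, (exists j', F i j') -> F i (sig i)).
  { intro i. exact (proj2_sig (constructive_indefinite_description _ (Hc i))). }
  assert (Hb : bounded_fam (fun i => e (sig i))).
  { intro m. destruct (He m) as [M HM]. exists M. intro i. apply HM. }
  specialize (HL _ Hb n eps Heps). simpl in HL.
  eexists. split. exact HL.
  intros i Hi j. cbv beta in Hi. unfold up_mul in Hi.
  destruct (Rlt_or_le (fa_P n (fa_sub (fa_mul (e i) (e j)) (e j))) eps) as [h|h]; auto.
  exfalso. assert (Fs := Hs i (ex_intro _ j h)). unfold F in Fs.
  rewrite Rminus_0_r, Rabs_pos_eq in Hi by apply fa_P_nonneg. lra.
Qed.

Lemma U_and {I : Type} (U : (I -> Prop) -> Prop) (HU : is_ultrafilter U) S T :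
  U S -> U T -> U (fun i => S i /\ T i).
Proof. destruct HU as (_&_&_&H&_). apply H. Qed.

Lemma U_ne {I : Type} (U : (I -> Prop) -> Prop) (HU : is_ultrafilter U) S :
  U S -> exists i, S i.
Proof.
  intro H. apply NNPP. intro Hn. destruct HU as (_&H0&Hup&_).
  apply H0. apply (Hup S (fun _ => False) H). intros i Hi. apply Hn. eauto.
Qed.

Lemma cauchyU {A : FrechetAlgebra} {I : Type} (U : (I -> Prop) -> Prop)
  (HU : is_ultrafilter U) (e : I -> A) (He : bounded_fam e) (HL : HLprop U e)
  (HR : @HLprop (opA A) I U e) :
  forall n eps, 0 < eps -> exists S, U S /\
    forall i j, S i -> S j -> fa_P n (fa_sub (e i) (e j)) < eps.
Proof.
  intros n eps Heps.
  destruct (claimL U HU e He HL n (eps/2)) as [SL [HSL HL']]; [lra|].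
  destruct (@claimL (opA A) I U HU e He HR n (eps/2)) as [SR [HSR HR']]; [lra|].
  exists (fun i => SL i /\ SR i). split. apply U_and; auto.
  intros i j [Li Ri] [Lj Rj].
  pose proof (P_tri n (e i) (fa_mul (e i) (e j)) (e j)).
  pose proof (HL' i Li j) as h1. pose proof (HR' j Rj i) as h2. simpl in h1, h2.
  rewrite (P_sub_sym n (e i) (fa_mul (e i) (e j))) in H. unfold fa_sub in *. lra.


Qed.

Lemma archi_eps (eps : R) (n : nat) : 0 < eps -> exists N, (n <= N)%nat /\ / INR (S N) < eps.
Proof.
  intro He. destruct (archimed (/ eps)) as [H1 _].
  assert (0 <= IZR (up (/eps))). { pose proof (Rinv_0_lt_compat _ He). lra. }
  destruct (IZN (up (/eps))) as [k Hk]. { apply le_IZR. exact H. }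
  exists (Nat.max n k). split. lia.
  assert (Hk' : / eps < INR (S (Nat.max n k))).
  { rewrite S_INR. rewrite Hk, <- INR_IZR_INZ in H1.
    pose proof (le_INR k (Nat.max n k) ltac:(lia)). lra. }
  assert (0 < INR (S (Nat.max n k))) by (apply lt_0_INR; lia).
  rewrite <- (Rinv_inv eps). apply Rinv_lt_contravar; auto.
  apply Rmult_lt_0_compat; auto. apply Rinv_0_lt_compat; auto.
Qed.

Lemma limU {A : FrechetAlgebra} {I : Type} (U : (I -> Prop) -> Prop)
  (HU : is_ultrafilter U) (e : I -> A)
  (C : forall n eps, 0 < eps -> exists S, U S /\
    forall i j, S i -> S j -> fa_P n (fa_sub (e i) (e j)) < eps) :
  exists l : A, forall n eps, 0 < eps -> exists S, U S /\
    forall i, S i -> fa_P n (fa_sub (e i) l) < eps.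
Proof.
  assert (C' : forall k, exists S, U S /\
    forall i j, S i -> S j -> fa_P k (fa_sub (e i) (e j)) < / INR (Datatypes.S k)).
  { intro k. apply C. apply Rinv_0_lt_compat, lt_0_INR. lia. }
  set (Sk := fun k => proj1_sig (constructive_indefinite_description _ (C' k))).
  assert (HSk : forall k, U (Sk k) /\ forall i j, Sk k i -> Sk k j ->
     fa_P k (fa_sub (e i) (e j)) < / INR (Datatypes.S k)).
  { intro k. exact (proj2_sig (constructive_indefinite_description _ (C' k))). }
  set (T := fun k i => forall m, (m <= k)%nat -> Sk m i).
  assert (HT : forall k, U (T k)).
  { pose proof HU as (_&_&Hup&_).
    induction k.
    - apply (Hup (Sk 0%nat)). apply HSk. intros i Hi m Hm. replace m with 0%nat by lia. exact Hi.
    - apply (Hup (fun i => T k i /\ Sk (S k) i)). apply U_and; auto. apply HSk.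
      intros i [H1 H2] m Hm. destruct (Nat.eq_dec m (S k)) as [->|Hne]; auto.
      apply H1. lia. }
  assert (Hne : forall k, exists i, T k i) by (intro k; apply (U_ne U HU), HT).
  set (ik := fun k => proj1_sig (constructive_indefinite_description _ (Hne k))).
  assert (Hik : forall k, T k (ik k)).
  { intro k. exact (proj2_sig (constructive_indefinite_description _ (Hne k))). }
  destruct (fa_complete A (fun k => e (ik k))) as [l Hl].
  { intros n eps Heps. destruct (archi_eps eps n Heps) as [N [HnN HN]].
    exists N. intros p q Hp Hq. eapply Rle_lt_trans. apply (P_mon n N); auto.
    eapply Rlt_trans; [|exact HN]. apply HSk; apply Hik; auto. }
  exists l. intros n eps Heps.
  destruct (archi_eps (eps/2) n) as [N1 [HnN HN]]; [lra|].
  destruct (Hl n (eps/2)) as [N2 HN2]; [lra|].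
  exists (Sk N1). split. apply HSk.
  intros i Hi. pose (p := Nat.max N1 N2).
  pose proof (P_tri n (e i) (e (ik p)) l).
  pose proof (HN2 p ltac:(lia)).
  assert (fa_P n (fa_sub (e i) (e (ik p))) < eps/2).
  { eapply Rle_lt_trans. apply (P_mon n N1); auto.
    eapply Rlt_trans; [|exact HN]. apply HSk; auto. apply Hik. lia. }
  unfold fa_sub in *. lra.
Qed.

Lemma left_unit {A : FrechetAlgebra} {I : Type} (U : (I -> Prop) -> Prop)
  (HU : is_ultrafilter U) (e : I -> A) (HL : HLprop U e) (l : A)
  (Hl : forall n eps, 0 < eps -> exists S, U S /\
    forall i, S i -> fa_P n (fa_sub (e i) l) < eps) :
  forall a : A, fa_mul l a = a.
Proof.
  intro a. apply sub_eq0, fa_sep. intro n.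
  apply Rle_antisym; [|apply fa_P_nonneg].
  apply Rnot_lt_le. intro Hpos.
  set (eps := fa_P n (fa_sub (fa_mul l a) a)) in *.
  set (c := fa_P n a + 1).
  assert (Hc : 0 < c) by (pose proof (fa_P_nonneg A n a); unfold c; lra).
  destruct (Hl n (eps / 2 / c)) as [S [HS HSi]].
  { apply Rdiv_lt_0_compat; lra. }
  assert (Hb : bounded_fam (fun _ : I => a)) by (intro m; exists (fa_P m a); intros; lra).
  pose proof (HL _ Hb n (eps/2) ltac:(lra)) as HV. simpl in HV.
  destruct (U_ne U HU _ (U_and U HU _ _ HS HV)) as [i [Hi Hv]].
  cbv beta in Hv. unfold up_mul in Hv.
  rewrite Rminus_0_r, Rabs_pos_eq in Hv by apply fa_P_nonneg.
  pose proof (P_tri n (fa_mul l a) (fa_mul (e i) a) a) as Ht.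
  rewrite sub_mulr in Ht.
  pose proof (fa_P_mul A n (fa_sub l (e i)) a) as Hm.
  pose proof (HSi i Hi) as Hd. rewrite P_sub_sym in Hd.
  pose proof (fa_P_nonneg A n a). pose proof (fa_P_nonneg A n (fa_sub l (e i))).
  assert (fa_P n (fa_sub l (e i)) * fa_P n a <= eps / 2 / c * fa_P n a).
  { apply Rmult_le_compat_r; lra. }
  assert (eps / 2 / c * fa_P n a < eps / 2).
  { replace (eps/2) with (eps/2/c * c) at 2 by (field; lra).
    apply Rmult_lt_compat_l. apply Rdiv_lt_0_compat; lra. unfold c; lra. }
  fold eps in Ht. lra.
Qed.

Theorem proposition3p1 (A : FrechetAlgebra) (I : Type)
  (U : (I -> Prop) -> Prop)
  (HU : is_ultrafilter U) (Hci : countably_incomplete U) :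
  ultrapower_unital A I U <-> unital A.
Proof.
  split.
  - intros [e [He H]].
    assert (HL : HLprop U e) by (intros x Hx; apply H, Hx).
    assert (HR : @HLprop (opA A) I U e) by (apply HL_op; intros x Hx; apply H, Hx).
    destruct (limU U HU e (cauchyU U HU e He HL HR)) as [l Hl].
    exists l. intro x. split.
    + exact (left_unit U HU e HL l Hl x).
    + exact (@left_unit (opA A) I U HU e HR l Hl x).
  - intros [e He]. exists (fun _ => e). split.
    + intro n. exists (fa_P n e). intros; lra.
    + intros x _. unfold up_eq, in_NU, ulim, up_mul.
      destruct HU as (HT&_&Hup&_).
      split; intros n eps Heps; apply (Hup (fun _ => True)); auto; intros i _;
        destruct (He (x i)) as [h1 h2]; [rewrite h1|rewrite h2];
        rewrite sub_xx, P_zero, Rminus_0_r, Rabs_R0; exact Heps.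
Qed.
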